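(* Let $\mathcal{M}$ be a deterministic MDP with $|\mathcal{S}\times\mathcal{A}|<\infty$, and let $\mathcal{D}$ be an offline dataset of transitions such that $N(s,a,\mathcal{T}(s,a))\ge1$ for every $(s,a)\in\mathcal{S}\times\mathcal{A}$. Then DiSPOs trained on $\mathcal{D}$ are guaranteed to identify an optimal policy (for any reward $r(s)=w_r^\top\phi(s)$ linear in the features).
   Context: $\mathcal{M}$ has state space $\mathcal{S}$, action space $\mathcal{A}$, deterministic transition $\mathcal{T}:\mathcal{S}\times\mathcal{A}\to\mathcal{S}$, discount $\gamma\in(0,1)$, and reward $r(s)=w_r^\top\phi(s)$ for a feature map $\phi:\mathcal{S}\to\mathbb{R}^d$. $N(s,a,s')$ denotes the number of occurrences of the transition $(s,a,s')$ in the dataset $\mathcal{D}$. A DiSPO consists of (1) an outcome model $p(\psi\mid s)$, the distribution of successor features $\psi=\sum_{t\ge1}\gamma^{t-1}\phi(s_t)$ over trajectories starting at $s_1=s$ that are covered by the dataset (learned by the fixed point of the distributional Bellman update: $p(\cdot\mid s)$ maximizes the likelihood of $\phi(s)+\gamma\psi_{s'}$ with $(s,a,s')\in\mathcal{D}$, $\psi_{s'}\sim p(\cdot\mid s')$), and (2) a readout policy $\pi(a\mid s,\psi)$ which outputs an action $a$ at $s$ whose dataset transition $(s,a,s')$ realizes the outcome $\psi=\phi(s)+\gamma\psi_{s'}$ with $\psi_{s'}$ in the support of $p(\cdot\mid s')$. The DiSPO policy at state $s$ selects $\psi^*\in\arg\max_\psi w_r^\top\psi$ subject to $p(\psi\mid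 s)>0$ and takes the action $a\sim\pi(a\mid s,\psi^* )$. *)

(* Defs.v *)
From HB Require Import structures.
From mathcomp Require Import all_boot all_order all_algebra.
From mathcomp Require Import all_classical all_reals.
From mathcomp Require Import topology normedtype sequences.
Set Implicit Arguments. Unset Strict Implicit. Unset Printing Implicit Defensive.
Import Order.TTheory GRing.Theory Num.Theory.
Import numFieldNormedType.Exports.
Local Open Scope classical_set_scope.
Local Open Scope ring_scope.

(** Deterministic trajectory s_1 = s0, s_{k+1} = T(s_k, a_k)  (0-indexed here). *)
Fixpoint traj (S A : Type) (T : S -> A -> S) (s0 : S) (a : nat -> A) (k : nat) : S :=
  match k with
  | 0 => s0
  | k'.+1 => T (traj T s0 a k') (a k')
  end.

Fixpoint rollout (S A : Type) (T : S -> A -> S) (mu : S -> A) (s0 : S) (k : nat) : S :=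
  match k with
  | 0 => s0
  | k'.+1 => T (rollout T mu s0 k') (mu (rollout T mu s0 k'))
  end.

Definition dotv (R : realType) (d : nat) (w x : 'I_d -> R) : R :=
  \sum_(i < d) w i * x i.

Definition succ_feat (R : realType) (S : Type) (d : nat) (gamma : R)
  (phi : S -> 'I_d -> R) (x : nat -> S) : 'I_d -> R :=
  fun i => limn (series (fun k => gamma ^+ k * phi (x k) i)).

Definition disc_return (R : realType) (S : Type) (d : nat) (gamma : R)
  (phi : S -> 'I_d -> R) (w : 'I_d -> R) (x : nat -> S) : R :=
  limn (series (fun k => gamma ^+ k * dotv w (phi (x k)))).

Definition covered (S A : Type) (T : S -> A -> S) (N : S -> A -> S -> nat)
  (s0 : S) (a : nat -> A) : Prop :=
  forall k, (0 < N (traj T s0 a k) (a k) (traj T s0 a k.+1))%N.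

(** Support of the DiSPO outcome model p(. | s): successor features of all
    dataset-covered trajectories starting at s. *)
Definition outcome_support (R : realType) (S A : Type) (d : nat)
  (T : S -> A -> S) (N : S -> A -> S -> nat) (gamma : R)
  (phi : S -> 'I_d -> R) (s : S) : set ('I_d -> R) :=
  [set psi | exists a : nat -> A,
      covered T N s a /\ psi = succ_feat gamma phi (traj T s a)].

Definition is_readout (R : realType) (S A : Type) (d : nat)
  (T : S -> A -> S) (N : S -> A -> S -> nat) (gamma : R)
  (phi : S -> 'I_d -> R) (pi : S -> ('I_d -> R) -> A) : Prop :=
  forall s psi, outcome_support T N gamma phi s psi ->
    (0 < N s (pi s psi) (T s (pi s psi)))%N /\
    exists psi', outcome_support T N gamma phi (T s (pi s psi)) psi' /\
      psi = (fun i => phi s i + gamma * psi' i).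

Definition is_max_outcome (R : realType) (S A : Type) (d : nat)
  (T : S -> A -> S) (N : S -> A -> S -> nat) (gamma : R)
  (phi : S -> 'I_d -> R) (w : 'I_d -> R) (s : S) (psi : 'I_d -> R) : Prop :=
  outcome_support T N gamma phi s psi /\
  forall psi', outcome_support T N gamma phi s psi' -> dotv w psi' <= dotv w psi.

(* Main.v *)
Require Import Defs.
From HB Require Import structures.
From mathcomp Require Import all_boot all_order all_algebra.
From mathcomp Require Import all_classical all_reals.
From mathcomp Require Import topology normedtype sequences.
From mathcomp Require Import ring.

Import Order.TTheory GRing.Theory Num.Theory.
Import numFieldNormedType.Exports.
Local Open Scope classical_set_scope.
Local Open Scope ring_scope.

Definition Lv (R : realType) (S : Type) (gamma : R) (g : S -> R) (x : nat -> S) : R :=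
  limn (series (fun k => gamma ^+ k * g (x k))).
Arguments Lv {R S}.

Definition Mb (R : realType) (S : finType) (g : S -> R) : R := \sum_(s : S) `|g s|.
Arguments Mb {R S}.

Lemma Mb_ge (R : realType) (S : finType) (g : S -> R) (s : S) : `|g s| <= Mb g.
Proof.
rewrite /Mb (bigD1 s) //= lerDl; apply: sumr_ge0 => *; exact: normr_ge0.
Qed.

Lemma ncvgL (R : realType) (S : finType) (gamma : R) (g : S -> R) (x : nat -> S) :
  0 < gamma < 1 ->
  cvgn (series (fun k => `|gamma ^+ k * g (x k)|)).
Proof.
move=> /andP[g0 g1].
apply: (@series_le_cvg _ _ (geometric (Mb g) gamma)).
- by move=> n; exact: normr_ge0.
- move=> n /=; apply: mulr_ge0; first by apply: sumr_ge0 => *; exact: normr_ge0.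
  by apply: exprn_ge0; exact: ltW.
- move=> n /=; rewrite normrM ger0_norm ?exprn_ge0 ?(ltW g0) // mulrC.
  by apply: ler_wpM2r; [apply: exprn_ge0; exact: ltW | exact: Mb_ge].
- apply: is_cvg_geometric_series; rewrite ger0_norm ?(ltW g0) //.
Qed.

Lemma cvgL (R : realType) (S : finType) (gamma : R) (g : S -> R) (x : nat -> S) :
  0 < gamma < 1 -> cvgn (series (fun k => gamma ^+ k * g (x k))).
Proof. move=> hg; apply: normed_cvg; exact: (ncvgL _ _ _ g x hg). Qed.

Lemma LvS (R : realType) (S : finType) (gamma : R) (g : S -> R) (x : nat -> S) :
  0 < gamma < 1 ->
  Lv gamma g x = g (x 0%N) + gamma * Lv gamma g (fun k => x k.+1).
Proof.
move=> hg; rewrite /Lv.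
set L' := limn (series (fun k => gamma ^+ k * g (x k.+1))).
have H : (fun n => series (fun k => gamma ^+ k * g (x k)) n.+1) @ \oo --> g (x 0%N) + gamma * L'.
  have -> : (fun n => series (fun k => gamma ^+ k * g (x k)) n.+1) =
     (fun n => g (x 0%N) + gamma * series (fun k => gamma ^+ k * g (x k.+1)) n).
    apply/funext => n; rewrite !seriesEord /= big_ord_recl /= expr0 mul1r.
    congr (_ + _); rewrite mulr_sumr; apply: eq_bigr => i _.
    by rewrite /bump /= add1n exprS mulrA.
  apply: cvgD; first exact: cvg_cst.
  apply: cvgMl_tmp; exact: (cvgL _ _ _ g (fun k => x k.+1) hg).
have H2 : series (fun k => gamma ^+ k * g (x k)) @ \oo --> g (x 0%N) + gamma * L'.
  by rewrite -cvg_shiftS.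
exact: cvg_lim H2.
Qed.

Lemma Ltel (R : realType) (S : finType) (gamma : R) (g V : S -> R) (x : nat -> S) :
  0 < gamma < 1 ->
  (forall k, V (x k) = g (x k) + gamma * V (x k.+1)) ->
  Lv gamma g x = V (x 0%N).
Proof.
move=> hg hV; rewrite /Lv.
have E : forall n, series (fun k => gamma ^+ k * g (x k)) n
                   = V (x 0%N) - gamma ^+ n * V (x n).
  elim=> [|n IH]; first by rewrite seriesEord /= big_ord0 expr0 mul1r subrr.
  rewrite seriesSr IH (hV n) exprS; ring.
have H0 := cvg_series_cvg_0 (cvgL _ _ _ V x hg).
have H : series (fun k => gamma ^+ k * g (x k)) @ \oo --> V (x 0%N) - 0.
  rewrite (_ : series _ = (fun n => V (x 0%N) - gamma ^+ n * V (x n))); last first.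
    by apply/funext => n; rewrite E.
  apply: cvgB; [exact: cvg_cst | exact: H0].
by rewrite (cvg_lim _ H) // subr0.
Qed.

Lemma Lbound (R : realType) (S : finType) (gamma : R) (g : S -> R) (x : nat -> S) :
  0 < gamma < 1 ->
  Lv gamma g x <= limn (series (geometric (Mb g) gamma)).
Proof.
move=> hg; have [g0 g1] := andP hg.
apply: le_trans (ler_norm _) _.
apply: le_trans (lim_series_norm _) _; first exact: (ncvgL _ _ _ g x hg).
apply: lim_series_le.
- exact: (ncvgL _ _ _ g x hg).
- apply: is_cvg_geometric_series; rewrite ger0_norm ?(ltW g0) //.
- move=> n /=; rewrite normrM ger0_norm ?exprn_ge0 ?(ltW g0) // mulrC.
  by apply: ler_wpM2r; [apply: exprn_ge0; exact: ltW | exact: Mb_ge].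
Qed.

Lemma cvg_bigsum (R : realType) (I : Type) (r : seq I) (c : I -> R)
   (u : I -> nat -> R) (l : I -> R) :
  (forall i, u i @ \oo --> l i) ->
  (fun n => \sum_(i <- r) c i * u i n) @ \oo --> \sum_(i <- r) c i * l i.
Proof.
move=> H; elim: r => [|i r IH].
  rewrite big_nil (_ : (fun n => _) = (fun _ => 0)); first exact: cvg_cst.
  by apply/funext => n; rewrite big_nil.
rewrite big_cons (_ : (fun n => _) = (fun n => c i * u i n + \sum_(j <- r) c j * u j n)).
  by apply: cvgD => //; apply: cvgMl_tmp.
by apply/funext => n; rewrite big_cons.
Qed.

Arguments cvg_bigsum {R I}.

Lemma dotv_L (R : realType) (S : finType) (d : nat) (gamma : R)
   (phi : S -> 'I_d -> R) (w : 'I_d -> R) (x : nat -> S) :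
  0 < gamma < 1 ->
  dotv w (succ_feat gamma phi x) = Lv gamma (fun s => dotv w (phi s)) x.
Proof.
move=> hg; rewrite /Lv /dotv /succ_feat.
have H := cvg_bigsum (index_enum 'I_d) w
   (fun i => series (fun k => gamma ^+ k * phi (x k) i))
   (fun i => limn (series (fun k => gamma ^+ k * phi (x k) i)))
   (fun i => cvgL _ _ _ (fun s => phi s i) x hg).
rewrite (_ : series _ = (fun n => \sum_(i <- index_enum 'I_d)
     w i * series (fun k => gamma ^+ k * phi (x k) i) n)).
  by rewrite (cvg_lim _ H).
apply/funext => n; rewrite seriesEord /=.
transitivity (\sum_(i < d) w i * \sum_(k < n) gamma ^+ k * phi (x k) i); last first.
  by apply: eq_bigr => i _; rewrite seriesEord.
under [RHS]eq_bigr do rewrite mulr_sumr.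
rewrite [RHS]exchange_big /=; apply: eq_bigr => k _.
rewrite mulr_sumr; apply: eq_bigr => i _; ring.
Qed.

Lemma traj_shift (S A : Type) (T : S -> A -> S) (s : S) (a : nat -> A) (k : nat) :
  traj T s a k.+1 = traj T (T s (a 0%N)) (fun j => a j.+1) k.
Proof. by elim: k => [|k IH] //=; rewrite -IH. Qed.

Lemma rollout_traj (S A : Type) (T : S -> A -> S) (mu : S -> A) (s : S) (k : nat) :
  rollout T mu s k = traj T s (fun j => mu (rollout T mu s j)) k.
Proof. by elim: k => [|k IH] //=; rewrite -IH. Qed.

Lemma dotv_lin (R : realType) (d : nat) (w p q : 'I_d -> R) (c : R) :
  dotv w (fun i => p i + c * q i) = dotv w p + c * dotv w q.
Proof.
rewrite /dotv mulr_sumr -big_split; apply: eq_bigr => i _ /=; ring.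
Qed.

Theorem theorem2 (R : realType) (S A : finType) (a0 : A) (d : nat)
  (T : S -> A -> S) (gamma : R) (phi : S -> 'I_d -> R)
  (N : S -> A -> S -> nat) :
  0 < gamma < 1 ->
  (* D consists of transitions of the deterministic MDP *)
  (forall s a s', (0 < N s a s')%N -> s' = T s a) ->
  (* coverage: N(s, a, T(s,a)) >= 1 for all (s, a) *)
  (forall s a, (1 <= N s a (T s a))%N) ->
  forall w : 'I_d -> R,
    (* the DiSPO policy is well defined: maximal outcomes and readouts exist *)
    (forall s, exists psi, is_max_outcome T N gamma phi w s psi) /\
    (exists pi, is_readout T N gamma phi pi) /\
    (* and every DiSPO policy is optimal *)
    (forall (psistar : S -> ('I_d -> R)) (pi : S -> ('I_d -> R) -> A),
      (forall s, is_max_outcome T N gamma phi w s (psistar s)) ->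
      is_readout T N gamma phi pi ->
      forall (s0 : S) (a : nat -> A),
        disc_return gamma phi w (traj T s0 a)
        <= disc_return gamma phi w (rollout T (fun s => pi s (psistar s)) s0)).
Proof.
move=> hg hD hcov w.
have [g0 g1] := andP hg.
pose g := fun s => dotv w (phi s).
have supp : forall s psi, outcome_support T N gamma phi s psi <->
    exists a, psi = succ_feat gamma phi (traj T s a).
  move=> s psi; split; first by move=> [a [_ ->]]; exists a.
  by move=> [a ->]; exists a; split => // k; exact: hcov.
have shiftL : forall (h : S -> R) s a, Lv gamma h (traj T s a) =
    h s + gamma * Lv gamma h (traj T (T s (a 0%N)) (fun j => a j.+1)).
  move=> h s a; rewrite LvS //; congr (_ + _ * _); congr Lv.
  by apply/funext => k; exact: traj_shift.
have dotJ : forall x, dotv w (succ_feat gamma phi x) = Lv gamma g x.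
  by move=> x; exact: dotv_L.
split; [|split].
- pose E s := [set y | exists a, y = Lv gamma g (traj T s a)].
  pose Vs s := sup (E s).
  have hsup : forall s, has_sup (E s).
    move=> s; split; first by exists (Lv gamma g (traj T s (fun _ => a0))); exists (fun _ => a0).
    exists (limn (series (geometric (Mb g) gamma))) => y [a ->]; exact: Lbound.
  have Vge : forall s a, Lv gamma g (traj T s a) <= Vs s.
    by move=> s a; apply: sup_upper_bound => //; exists a.
  have bell1 : forall s b, g s + gamma * Vs (T s b) <= Vs s.
    move=> s b.
    have : Vs (T s b) <= (Vs s - g s) / gamma.
      apply: ge_sup; first exact: (hsup _).1.
      move=> y [a' ->]; rewrite ler_pdivlMr // mulrC lerBrDl.
      pose a := fun k => if k is k'.+1 then a' k' else b.
      by have := Vge s a; rewrite shiftL.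
    by rewrite ler_pdivlMr // mulrC lerBrDl.
  have greedy : forall s, exists b, forall b', Vs (T s b') <= Vs (T s b).
    move=> s; case: (@arg_maxP _ R A a0 xpredT (fun b => Vs (T s b)) isT) => b _ H.
    by exists b => b'; exact: H.
  have [mu hmu] := choice greedy.
  have bell2 : forall s, Vs s <= g s + gamma * Vs (T s (mu s)).
    move=> s; apply: ge_sup; first exact: (hsup _).1.
    move=> y [a ->]; rewrite shiftL lerD2l; apply: ler_wpM2l; first exact: ltW.
    exact: le_trans (Vge _ _) (hmu s (a 0%N)).
  have bell : forall s, Vs s = g s + gamma * Vs (T s (mu s)).
    by move=> s; apply/le_anti/andP; split; [exact: bell2 | exact: bell1].
  move=> s; exists (succ_feat gamma phi (rollout T mu s)); split.
    apply/supp; exists (fun j => mu (rollout T mu s j)); congr succ_feat.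
    by apply/funext => k; exact: rollout_traj.
  move=> psi' /supp [a ->]; rewrite !dotJ.
  rewrite (Ltel _ _ _ g Vs (rollout T mu s) hg); first exact: Vge.
  by move=> k; exact: bell.
- have H : forall s psi, exists b, outcome_support T N gamma phi s psi ->
      (0 < N s b (T s b))%N /\ exists psi', outcome_support T N gamma phi (T s b) psi' /\
        psi = (fun i => phi s i + gamma * psi' i).
    move=> s psi; case: (pselect (outcome_support T N gamma phi s psi)) => [hs|hs]; last first.
      by exists a0.
    have [a ->] := (supp s psi).1 hs.
    exists (a 0%N) => _; split; first exact: hcov.
    exists (succ_feat gamma phi (traj T (T s (a 0%N)) (fun j => a j.+1))); split.
      by apply/supp; eexists.
    apply/funext => i; rewrite /succ_feat.
    exact: (shiftL (fun s => phi s i) s a).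
  have H' : forall s, exists f : ('I_d -> R) -> A, forall psi,
      outcome_support T N gamma phi s psi ->
      (0 < N s (f psi) (T s (f psi)))%N /\ exists psi', outcome_support T N gamma phi (T s (f psi)) psi' /\
        psi = (fun i => phi s i + gamma * psi' i).
    by move=> s; have [f hf] := choice (H s); exists f.
  have [f hf] := choice H'.
  by exists f => s psi hs; exact: (hf s psi hs).
- move=> psistar pi hmax hpi s0 a.
  pose V s := dotv w (psistar s).
  have Vge : forall s a, Lv gamma g (traj T s a) <= V s.
    move=> s a'; rewrite -dotJ; apply: (hmax s).2; apply/supp; by exists a'.
  have bell1 : forall s b, g s + gamma * V (T s b) <= V s.
    move=> s b; have [a' ea'] := (supp _ _).1 (hmax (T s b)).1.
    pose a2 := fun k => if k is k'.+1 then a' k' else b.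
    by have := Vge s a2; rewrite shiftL /V ea' dotJ.
  have bell2 : forall s, V s <= g s + gamma * V (T s (pi s (psistar s))).
    move=> s; have [_ [psi' [hs' E]]] := hpi s (psistar s) (hmax s).1.
    move: hs'; set b := pi s (psistar s) => hs'.
    rewrite /V {1}E dotv_lin lerD2l; apply: ler_wpM2l; first exact: ltW.
    exact: (hmax (T s b)).2.
  have bell : forall s, V s = g s + gamma * V (T s (pi s (psistar s))).
    by move=> s; apply/le_anti/andP; split; [exact: bell2 | exact: bell1].
  change (Lv gamma g (traj T s0 a) <= Lv gamma g (rollout T (fun s => pi s (psistar s)) s0)).
  rewrite (Ltel _ _ _ g V (rollout T (fun s => pi s (psistar s)) s0) hg); first exact: Vge.
  by move=> k; exact: bell.
Qed.
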